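(* For every RelReach instance with $\mathsf{comp}\in\{\ge,>,\not\approx_\epsilon\mid \epsilon\in\mathbb Q_{\ge0}\}$ satisfying one of the conditions (a) $n=m$; (b) for all $i,i'$: $k_i=k_{i'}\Rightarrow s_i=s_{i'}$, and all $T_i$ are absorbing; (c) for all $i,i'$: $k_i=k_{i'}\Rightarrow((q_i\ge0\iff q_{i'}\ge 0)\wedge T_i=T_{i'})$, the property holds when quantifying over general schedulers if and only if it holds when quantifying over memoryless deterministic schedulers.
   Context: An MDP is $\mathcal M=(S,\mathrm{Act},P)$ with $S,\mathrm{Act}$ finite non-empty and $P:S\times\mathrm{Act}\times S\to[0,1]$ such that each state has a non-empty set of enabled actions $\alpha$ (with $\sum_{s'}P(s,\alpha,s')=1$), and $\sum_{s'}P(s,\alpha,s')=0$ for others. A state is absorbing if $P(s,\alpha,s)=1$ for all enabled $\alpha$; a set is absorbing if all its states are. A general scheduler maps finite paths to distributions over enabled actions of the last state; a memoryless deterministic (MD) scheduler chooses one enabled action depending only on the current state. $\Pr^\sigma_s(\Diamond T)$ is the probability of eventually reaching $T$ from $s$ under $\sigma$. A RelReach property is $\exists \sigma_1,\ldots,\sigma_n.~\sum_{i=1}^m q_i\Pr^{\sigma_{k_i}}_{s_i}(\Diamond T_i)\ \mathsf{comp}\ q_{m+1}$ with $m\ge n$, $q_i\in\mathbb Q$, $s_i\in S$, $\{k_1,\dots,k_m\}=\{1,\dots,n\}$, $T_i\subseteq S$; $r\not\approx_\epsilon r'$ iff $|r-r'|>\epsilon$. *)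

(* Defs.v *)
From HB Require Import structures.
From mathcomp Require Import all_boot all_order all_algebra.
From mathcomp Require Import classical_sets reals.
Set Implicit Arguments. Unset Strict Implicit. Unset Printing Implicit Defensive.
Import Order.TTheory GRing.Theory Num.Theory.
Local Open Scope ring_scope.
Local Open Scope classical_set_scope.

Section MDP.
Variables (R : realType) (S Act : finType).
Variable P : S -> Act -> S -> R.

Definition enabled (s : S) (a : Act) : bool := (\sum_(s' : S) P s a s') == 1.

Definition mdp_wf : Prop :=
  [/\ (forall s a s', 0 <= P s a s' <= 1),
      (forall s a, (\sum_(s' : S) P s a s' == 1) || (\sum_(s' : S) P s a s' == 0))
    & (forall s, exists a, enabled s a)].

Definition absorbing_state (s : S) : Prop := forall a, enabled s a -> P s a s = 1.
Definition absorbing (T : {set S}) : Prop := forall s, s \in T -> absorbing_state s.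

(* A finite path s0 a0 s1 a1 ... ak sk is represented by its first state s0
   and the sequence of steps [(a0,s1); ...; (a_{k-1},sk)]. *)
Definition last_state (s0 : S) (h : seq (Act * S)) : S := last s0 [seq x.2 | x <- h].

Definition scheduler := S -> seq (Act * S) -> Act -> R.

Definition is_scheduler (sigma : scheduler) : Prop :=
  forall s0 h,
    [/\ (forall a, 0 <= sigma s0 h a),
        (forall a, ~~ enabled (last_state s0 h) a -> sigma s0 h a = 0)
      & \sum_(a : Act) sigma s0 h a = 1].

Definition is_md (d : S -> Act) : Prop := forall s, enabled s (d s).

Definition md_sched (d : S -> Act) : scheduler :=
  fun s0 h a => if a == d (last_state s0 h) then 1 else 0.

Fixpoint reach_within (sigma : scheduler) (T : {set S}) (s0 : S) (k : nat)
    (h : seq (Act * S)) : R :=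
  let t := last_state s0 h in
  if t \in T then 1 else
  match k with
  | 0 => 0
  | k'.+1 => \sum_(a : Act) \sum_(t' : S)
               sigma s0 h a * P t a t' * reach_within sigma T s0 k' (rcons h (a, t'))
  end.

(* Pr^sigma_s(<> T) = sup_k Pr^sigma_s(reach T within k steps)
   (continuity of the path measure from below) *)
Definition Pr_reach (sigma : scheduler) (s : S) (T : {set S}) : R :=
  sup (range (fun k : nat => reach_within sigma T s k [::])).

End MDP.

Inductive rcomp := CGe | CGt | CNapprox of rat.

Definition comp_ok (c : rcomp) : Prop :=
  match c with CNapprox eps => 0 <= eps | _ => True end.

Definition comp_holds (R : realType) (c : rcomp) (x y : R) : Prop :=
  match c with
  | CGe => y <= x
  | CGt => y < x
  | CNapprox eps => ratr eps < `|x - y|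
  end.

Definition relsum (R : realType) (S Act : finType) (P : S -> Act -> S -> R)
  (n m : nat) (q : 'I_m -> rat) (s : 'I_m -> S) (k : 'I_m -> 'I_n)
  (T : 'I_m -> {set S}) (sig : 'I_n -> scheduler R S Act) : R :=
  \sum_(i < m) ratr (q i) * Pr_reach P (sig (k i)) (s i) (T i).

Definition RelReach_gen (R : realType) (S Act : finType) (P : S -> Act -> S -> R)
  (n m : nat) (q : 'I_m -> rat) (s : 'I_m -> S) (k : 'I_m -> 'I_n)
  (T : 'I_m -> {set S}) (c : rcomp) (qc : rat) : Prop :=
  exists sig : 'I_n -> scheduler R S Act,
    (forall j, is_scheduler P (sig j)) /\
    comp_holds c (relsum P q s k T sig) (ratr qc).

Definition RelReach_md (R : realType) (S Act : finType) (P : S -> Act -> S -> R)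
  (n m : nat) (q : 'I_m -> rat) (s : 'I_m -> S) (k : 'I_m -> 'I_n)
  (T : 'I_m -> {set S}) (c : rcomp) (qc : rat) : Prop :=
  exists d : 'I_n -> S -> Act,
    (forall j, is_md P (d j)) /\
    comp_holds c (relsum P q s k T (fun j => @md_sched R S Act (d j))) (ratr qc).

(* Main.v *)
Require Import Defs.
From HB Require Import structures.
From mathcomp Require Import all_boot all_order all_algebra.
From mathcomp Require Import classical_sets reals.
Set Implicit Arguments. Unset Strict Implicit. Unset Printing Implicit Defensive.
Import Order.TTheory GRing.Theory Num.Theory.
Local Open Scope ring_scope.
From mathcomp Require Import lra.

Section Sups.
Variable R : realType.
Implicit Types (f : nat -> R) (b x e : R).

Definition supn (f : nat -> R) : R := sup (range f).

Definition ndecr (f : nat -> R) := forall k, f k <= f k.+1.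

Lemma ndecr_le f : ndecr f -> forall i j, (i <= j)%N -> f i <= f j.
Proof.
move=> hf i j /subnK <-; elim: (j - i)%N => [|d IH]; first by rewrite add0n.
by apply: le_trans IH _; rewrite addSn; apply: hf.
Qed.

Lemma has_sup_range f b : (forall k, f k <= b) -> has_sup (range f).
Proof.
move=> hb; split; first by exists (f 0%N), 0%N.
by exists b => x [k _ <-].
Qed.

Lemma supn_ub f b : (forall k, f k <= b) -> forall k, f k <= supn f.
Proof. move=> hb k; apply: sup_upper_bound (has_sup_range hb) _ _; by exists k. Qed.

Lemma supn_le f x : (forall k, f k <= x) -> supn f <= x.
Proof. by move=> hx; apply: ge_sup; [exists (f 0%N), 0%N | move=> y [k _ <-]]. Qed.

Lemma supn_approx f b : (forall k, f k <= b) -> ndecr f ->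
  forall e, 0 < e -> exists K, forall k, (K <= k)%N -> supn f - e < f k.
Proof.
move=> hb hf e he; have [y [K _ <-] hK] := sup_adherent he (has_sup_range hb).
by exists K => k hk; apply: lt_le_trans hK (ndecr_le hf hk).
Qed.

Lemma supn_shift f b : (forall k, f k <= b) -> ndecr f -> supn (fun k => f k.+1) = supn f.
Proof.
move=> hb hf; apply/eqP; rewrite eq_le; apply/andP; split.
  by apply: supn_le => k; apply: supn_ub hb _.
apply: supn_le => k; apply: le_trans (hf k) _.
by apply: (@supn_ub (fun k => f k.+1) b) => i.
Qed.

Lemma le_eps (x y : R) : (forall e, 0 < e -> x <= y + e) -> x <= y.
Proof. by move=> h; apply/ler_addgt0Pr. Qed.

Lemma unif_approx (I : finType) (F : nat -> I -> R) b :
  (forall k i, F k i <= b) -> (forall i, ndecr (F^~ i)) ->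
  forall e, 0 < e -> exists K, forall k, (K <= k)%N -> forall i, supn (F^~ i) - e < F k i.
Proof.
move=> hb hf e he.
suff [K HK] : exists K, forall k, (K <= k)%N -> forall i, i \in enum I -> supn (F^~ i) - e < F k i.
  by exists K => k hk i; apply: HK => //; rewrite mem_enum.
elim: (enum I) => [|i l [K HK]]; first by exists 0%N.
have [Ki HKi] := supn_approx (fun k => hb k i) (hf i) he.
exists (maxn K Ki) => k hk j; rewrite inE => /orP [/eqP ->|jl].
  by apply: HKi; apply: leq_trans hk; apply: leq_maxr.
by apply: HK => //; apply: leq_trans hk; apply: leq_maxl.
Qed.

Lemma supn_lin (I : finType) (c : I -> R) (F : nat -> I -> R) b :
  (forall i, 0 <= c i) ->
  (forall k i, F k i <= b) -> (forall i, ndecr (F^~ i)) ->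
  supn (fun k => \sum_i c i * F k i) = \sum_i c i * supn (F^~ i).
Proof.
move=> hc hb hf; apply/eqP; rewrite eq_le; apply/andP; split.
  apply: supn_le => k; apply: ler_sum => i _; apply: ler_wpM2l => //.
  exact: (supn_ub (fun k => hb k i)).
have hb' : forall k, \sum_i c i * F k i <= \sum_i c i * b.
  by move=> k; apply: ler_sum => i _; apply: ler_wpM2l.
apply: le_eps => e he.
set C := \sum_i c i.
have hC : 0 <= C by apply: sumr_ge0.
have he' : 0 < e / (C + 1) by apply: divr_gt0 => //; apply: ltr_wpDl.
have [K HK] := unif_approx hb hf he'.
apply: le_trans (_ : \sum_i c i * F K i + e <= _); last first.
  by rewrite lerD2r; apply: (supn_ub hb').
rewrite -lerBlDr.
have -> : e = \sum_i c i * (e / (C+1)) + e * (1 - C / (C + 1)).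
  by rewrite -mulr_suml -/C mulrBr mulr1 mulrCA mulrA addrC subrK.
apply: le_trans (_ : \sum_i c i * supn (F^~ i) - \sum_i c i * (e / (C + 1)) <= _).
  rewrite opprD addrA lerBlDr lerDl; apply: mulr_ge0; first exact: ltW.
  rewrite subr_ge0 ler_pdivrMr ?mul1r ?lerDl //; exact: ltr_wpDl.
rewrite -sumrB; apply: ler_sum => i _; rewrite -mulrBr; apply: ler_wpM2l => //.
by apply: ltW; apply: HK.
Qed.

End Sups.

Section MDPBasics.
Variables (R : realType) (S Act : finType) (P : S -> Act -> S -> R).
Hypothesis wf : mdp_wf P.

Notation lst := (@last_state S Act).
Notation sched := (scheduler R S Act).
Implicit Types (sg : sched) (u t : S) (a : Act) (h : seq (Act * S)).

Lemma P_ge0 u a t : 0 <= P u a t.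
Proof. by case: wf => H _ _; case/andP: (H u a t). Qed.

Lemma P_le1 u a t : P u a t <= 1.
Proof. by case: wf => H _ _; case/andP: (H u a t). Qed.

Lemma en_sum u a : enabled P u a -> \sum_t P u a t = 1.
Proof. by move/eqP. Qed.

Lemma nen_P u a t : ~~ enabled P u a -> P u a t = 0.
Proof.
move=> hn; case: wf => _ H _; have := H u a; rewrite -/(enabled P u a) (negbTE hn) /= => /eqP h0.
by apply: (psumr_eq0P (P := predT) (fun t _ => P_ge0 u a t) h0).
Qed.

Lemma last_rcons_st s0 h x : lst s0 (rcons h x) = x.2.
Proof. by rewrite /last_state map_rcons last_rcons. Qed.

Lemma absorb_P u a t : absorbing_state P u -> enabled P u a -> P u a t = (t == u)%:R.
Proof.
move=> hab hen; have h1 := hab a hen.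
have := en_sum hen; rewrite (bigD1 u) //= h1 => /(congr1 (fun x => x - 1)); rewrite addrC addrK subrr => h0.
case: eqP => [->|/eqP ne]; first by [].
by apply: (psumr_eq0P (P := fun t => t != u) (fun t _ => P_ge0 u a t) h0).
Qed.

Fixpoint Ek sg (F : seq (Act * S) -> R) (s0 : S) (k : nat) h : R :=
  match k with
  | 0 => F h
  | k'.+1 => \sum_a \sum_t sg s0 h a * P (lst s0 h) a t * Ek sg F s0 k' (rcons h (a, t))
  end.

Lemma Ek_tower sg F s0 k n h :
  Ek sg F s0 (k + n) h = Ek sg (fun h' => Ek sg F s0 n h') s0 k h.
Proof.
elim: k h => [|k IH] h //=.
by apply: eq_bigr => a _; apply: eq_bigr => t _; rewrite IH.
Qed.

Lemma Ek_ext sg F1 F2 s0 k h : (forall h', F1 h' = F2 h') -> Ek sg F1 s0 k h = Ek sg F2 s0 k h.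
Proof.
move=> H; elim: k h => [|k IH] h //=.
by apply: eq_bigr => a _; apply: eq_bigr => t _; rewrite IH.
Qed.

Section Valid.
Variable sg : sched.
Hypothesis hsg : is_scheduler P sg.

Lemma sg_ge0 s0 h a : 0 <= sg s0 h a.
Proof. by case: (hsg s0 h) => H _ _. Qed.

Lemma sg_nen s0 h a : ~~ enabled P (lst s0 h) a -> sg s0 h a = 0.
Proof. by case: (hsg s0 h) => _ H _; apply: H. Qed.

Lemma sg_sum s0 h : \sum_a sg s0 h a = 1.
Proof. by case: (hsg s0 h). Qed.

Lemma step_le s0 h (g : Act -> S -> R) M :
  (forall a, enabled P (lst s0 h) a -> \sum_t P (lst s0 h) a t * g a t <= M) ->
  \sum_a \sum_t sg s0 h a * P (lst s0 h) a t * g a t <= M.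
Proof.
move=> H.
apply: le_trans (_ : \sum_a sg s0 h a * M <= _); last by rewrite -mulr_suml sg_sum mul1r.
apply: ler_sum => a _.
under eq_bigr do rewrite -mulrA.
rewrite -mulr_sumr; have [en|nen] := boolP (enabled P (lst s0 h) a).
  by apply: ler_wpM2l; [apply: sg_ge0 | apply: H].
by rewrite sg_nen // !mul0r.
Qed.

Lemma step_ge s0 h (g : Act -> S -> R) M :
  (forall a, enabled P (lst s0 h) a -> M <= \sum_t P (lst s0 h) a t * g a t) ->
  M <= \sum_a \sum_t sg s0 h a * P (lst s0 h) a t * g a t.
Proof.
move=> H.
apply: le_trans (_ : M <= \sum_a sg s0 h a * M) _; first by rewrite -mulr_suml sg_sum mul1r.
apply: ler_sum => a _.
under [X in _ <= X]eq_bigr do rewrite -mulrA.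
rewrite -mulr_sumr; have [en|nen] := boolP (enabled P (lst s0 h) a).
  by apply: ler_wpM2l; [apply: sg_ge0 | apply: H].
by rewrite sg_nen // !mul0r.
Qed.

Lemma Ek_le F1 F2 s0 k h : (forall h', F1 h' <= F2 h') -> Ek sg F1 s0 k h <= Ek sg F2 s0 k h.
Proof.
move=> H; elim: k h => [|k IH] h //=.
apply: ler_sum => a _; apply: ler_sum => t _; apply: ler_wpM2l => //.
by apply: mulr_ge0; [apply: sg_ge0 | apply: P_ge0].
Qed.

Lemma Ek_const x s0 k h : Ek sg (fun _ => x) s0 k h = x.
Proof.
elim: k h => [|k IH] h //=.
under eq_bigr do under eq_bigr do rewrite IH.
apply/eqP; rewrite eq_le; apply/andP; split.
  by apply: step_le => a en; rewrite -mulr_suml en_sum ?mul1r.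
by apply: step_ge => a en; rewrite -mulr_suml en_sum ?mul1r.
Qed.

Lemma Ek_lin (I : finType) (w : I -> R) (F : I -> seq (Act * S) -> R) s0 k h :
  Ek sg (fun h' => \sum_i w i * F i h') s0 k h = \sum_i w i * Ek sg (F i) s0 k h.
Proof.
elim: k h => [|k IH] h //=.
under eq_bigr do under eq_bigr do rewrite IH mulr_sumr.
under eq_bigr do rewrite exchange_big /=.
rewrite exchange_big /=; apply: eq_bigr => i _.
rewrite mulr_sumr; apply: eq_bigr => a _; rewrite mulr_sumr; apply: eq_bigr => t _.
by rewrite mulrCA.
Qed.

Lemma Ek_add F1 F2 s0 k h :
  Ek sg (fun h' => F1 h' + F2 h') s0 k h = Ek sg F1 s0 k h + Ek sg F2 s0 k h.
Proof.
have := Ek_lin (fun b : bool => 1) (fun b => if b then F1 else F2) s0 k h.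
rewrite /= big_bool /= !mul1r => <-.
by apply: Ek_ext => h'; rewrite big_bool /= !mul1r addrC.
Qed.

Lemma Ek_scale x F s0 k h :
  Ek sg (fun h' => x * F h') s0 k h = x * Ek sg F s0 k h.
Proof.
have := Ek_lin (fun _ : 'I_1 => x) (fun _ => F) s0 k h.
rewrite big_ord1 => <-; apply: Ek_ext => h'; by rewrite big_ord1.
Qed.

Lemma Ek_super (phi : S -> R) s0 k h :
  (forall u a, enabled P u a -> \sum_t P u a t * phi t <= phi u) ->
  Ek sg (fun h' => phi (lst s0 h')) s0 k h <= phi (lst s0 h).
Proof.
move=> H; elim: k h => [|k IH] h //=.
apply: le_trans (_ : \sum_a \sum_t sg s0 h a * P (lst s0 h) a t * phi t <= _).
  apply: ler_sum => a _; apply: ler_sum => t _; apply: ler_wpM2l.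
    by apply: mulr_ge0; [apply: sg_ge0 | apply: P_ge0].
  by apply: le_trans (IH _) _; rewrite last_rcons_st.
by apply: step_le => a en; apply: H.
Qed.

Lemma Ek_absorb (phi : S -> R) s0 k h :
  absorbing_state P (lst s0 h) ->
  Ek sg (fun h' => phi (lst s0 h')) s0 k h = phi (lst s0 h).
Proof.
elim: k h => [|k IH] h //= hab.
have E : forall a, enabled P (lst s0 h) a ->
   \sum_t P (lst s0 h) a t * Ek sg (fun h' => phi (lst s0 h')) s0 k (rcons h (a, t)) = phi (lst s0 h).
  move=> a en; rewrite (bigD1 (lst s0 h)) //= big1 ?addr0.
    by rewrite absorb_P // eqxx mul1r IH last_rcons_st.
  by move=> t /negbTE tn; rewrite absorb_P // tn mul0r.
apply/eqP; rewrite eq_le; apply/andP; split.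
  by apply: step_le => a en; rewrite E.
by apply: step_ge => a en; rewrite E.
Qed.

End Valid.

Lemma md_valid d : is_md P d -> is_scheduler P (@md_sched R S Act d).
Proof.
move=> hd s0 h; split.
- by move=> a; rewrite /md_sched; case: eqP.
- by move=> a; rewrite /md_sched; case: eqP => // -> /negP; rewrite hd.
- by rewrite /md_sched (bigD1 (d (lst s0 h))) //= eqxx big1 ?addr0 // => a /negbTE ->.
Qed.

Definition Bd (d : S -> Act) (w : S -> R) : S -> R := fun u => \sum_t P u (d u) t * w t.

Lemma Ek_md d (phi : S -> R) s0 k h :
  Ek (@md_sched R S Act d) (fun h' => phi (lst s0 h')) s0 k h = iter k (Bd d) phi (lst s0 h).
Proof.
elim: k h => [|k IH] h //=.
rewrite /Bd (bigD1 (d (lst s0 h))) //= [X in _ + X]big1 ?addr0.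
  by apply: eq_bigr => t _; rewrite /md_sched eqxx mul1r IH last_rcons_st.
by move=> a ne; apply: big1 => t _; rewrite /md_sched (negbTE ne) !mul0r.
Qed.

End MDPBasics.

Lemma pos_min (R : realType) (X : finType) (f : X -> R) :
  exists p, [/\ 0 < p, p <= 1 & forall x, 0 < f x -> p <= f x].
Proof.
suff [p [p0 p1 H]] : exists p, [/\ 0 < p, p <= 1 & forall x, x \in enum X -> 0 < f x -> p <= f x].
  by exists p; split => // x; apply: H; rewrite mem_enum.
elim: (enum X) => [|x l [p [p0 p1 H]]]; first by exists 1; split.
have [fx|fx] := boolP (0 < f x).
  exists (Num.min p (f x)); split.
  - by rewrite lt_min p0 fx.
  - by rewrite ge_min p1.
  - move=> y; rewrite inE => /orP [/eqP ->|yl] fy; first by rewrite ge_min lexx orbT.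
    by rewrite ge_min H.
exists p; split => // y; rewrite inE => /orP [/eqP ->|yl] fy; first by rewrite fy in fx.
exact: H.
Qed.

Section Core.
Variables (R : realType) (S Act : finType) (P : S -> Act -> S -> R).
Hypothesis wf : mdp_wf P.
Variable G : {set S}.
Hypothesis hG : absorbing P G.
Variables (I : finType) (wt : I -> R) (Tt : I -> {set S}).
Hypothesis hT : forall i, Tt i \subset G.

Notation lst := (@last_state S Act).
Notation sched := (scheduler R S Act).
Implicit Types (sg : sched) (u t : S) (a : Act) (h : seq (Act * S)) (X : {set S}).

Definition ind (X : {set S}) u : R := (u \in X)%:R.
Definition rho u := \sum_i wt i * ind (Tt i) u.

Definition Obj sg s :=
  \sum_i wt i * supn (fun k => Ek P sg (fun h => ind (Tt i) (lst s h)) s k [::]).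

Lemma ind_ge0 X u : 0 <= ind X u. Proof. by rewrite /ind; case: (u \in X). Qed.
Lemma ind_le1 X u : ind X u <= 1. Proof. by rewrite /ind; case: (u \in X). Qed.

Lemma rho_out u : u \notin G -> rho u = 0.
Proof.
move=> uG; apply: big1 => i _; rewrite /ind.
have -> : (u \in Tt i) = false.
  apply/negbTE; apply: contra uG => H.
  exact: (fintype.subsetP (hT i) u H).
by rewrite mulr0.
Qed.

Lemma sum_delta u (w : S -> R) : \sum_t (t == u)%:R * w t = w u.
Proof.
by rewrite (bigD1 u) //= eqxx mul1r big1 ?addr0 // => t /negbTE ->; rewrite mul0r.
Qed.

Lemma sumP_absorb u a (w : S -> R) : u \in G -> enabled P u a -> \sum_t P u a t * w t = w u.
Proof.
move=> uG en; rewrite -[RHS](sum_delta u w); apply: eq_bigr => t _.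
by rewrite (absorb_P wf) //; apply: hG.
Qed.

Section ValidSched.
Variable sg : sched.
Hypothesis hsg : is_scheduler P sg.

Lemma Ek_ind_bnd X (s0 : S) k h :
  0 <= Ek P sg (fun h' => ind X (lst s0 h')) s0 k h <= 1.
Proof.
apply/andP; split.
  by rewrite -(Ek_const hsg 0 s0 k h); apply: Ek_le => // h'; apply: ind_ge0.
by rewrite -(Ek_const hsg 1 s0 k h); apply: Ek_le => // h'; apply: ind_le1.
Qed.

Lemma Ek_ind_ndecr X (s0 : S) h : X \subset G ->
  ndecr (fun k => Ek P sg (fun h' => ind X (lst s0 h')) s0 k h).
Proof.
move=> XG k; rewrite -[k.+1]addn1.
rewrite Ek_tower; apply: Ek_le => // h'.
have [uX|uX] := boolP (lst s0 h' \in X).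
  rewrite Ek_absorb //; last by apply: hG; apply: (fintype.subsetP XG).
by rewrite /ind (negbTE uX); case/andP: (Ek_ind_bnd X s0 1 h').
Qed.

End ValidSched.

Lemma ex_en u : exists a, enabled P u a.
Proof. by case: wf => _ _ H; apply: H. Qed.

Definition a0 u : Act := xchoose (ex_en u).
Lemma a0_en u : enabled P u (a0 u).
Proof. exact: (xchooseP (ex_en u)). Qed.

Definition amax (w : S -> R) u : Act :=
  Order.arg_max (a0 u) (enabled P u) (fun a => \sum_t P u a t * w t).

Definition B (w : S -> R) : S -> R := fun u => \sum_t P u (amax w u) t * w t.

Lemma amax_en w u : enabled P u (amax w u).
Proof. by rewrite /amax; case: (arg_maxP _ (a0_en u)). Qed.

Lemma B_ge w u a : enabled P u a -> \sum_t P u a t * w t <= B w u.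
Proof. by rewrite /B /amax; case: (arg_maxP _ (a0_en u)) => a' _ H /H. Qed.

Lemma sumP_mono u a (w w' : S -> R) : (forall t, w t <= w' t) ->
  \sum_t P u a t * w t <= \sum_t P u a t * w' t.
Proof. by move=> H; apply: ler_sum => t _; apply: ler_wpM2l => //; apply: (P_ge0 wf). Qed.

Lemma sumP_const u a x : enabled P u a -> \sum_t P u a t * x = x.
Proof. by move=> en; rewrite -mulr_suml en_sum // mul1r. Qed.

Lemma B_mono (w w' : S -> R) u : (forall t, w t <= w' t) -> B w u <= B w' u.
Proof. by move=> H; apply: le_trans (sumP_mono _ _ H) (B_ge _ (amax_en w u)). Qed.

Lemma B_ub (w : S -> R) b u : (forall t, w t <= b) -> B w u <= b.
Proof. by move=> H; rewrite -(sumP_const b (amax_en w u)); apply: sumP_mono. Qed.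

Lemma B_G w u : u \in G -> B w u = w u.
Proof. by move=> uG; rewrite /B sumP_absorb // amax_en. Qed.

Definition PhiC (X : {set S}) : {set S} :=
  G :|: [set u | [forall a, enabled P u a ==> [exists t, (t \in X) && (0 < P u a t)]]].

Lemma PhiC_mono : {homo PhiC : X Y / X \subset Y}.
Proof.
move=> X Y XY; apply/fintype.subsetP => u; rewrite !inE => /orP [->//|/forallP H].
apply/orP; right; apply/forallP => a; apply/implyP => en.
have /existsP [t /andP [tX Pt]] := implyP (H a) en.
by apply/existsP; exists t; rewrite Pt (fintype.subsetP XY).
Qed.

Definition C := fixset PhiC.
Definition Z := ~: C.

Lemma C_fix : PhiC C = C.
Proof. exact: fixsetK PhiC_mono. Qed.

Lemma G_C : G \subset C.
Proof. by rewrite -C_fix; apply: finset.subsetUl. Qed.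

Lemma Z_notG u : u \in Z -> u \notin G.
Proof. by rewrite inE; apply: contra; apply: (fintype.subsetP G_C). Qed.

Lemma Z_stay u : u \in Z -> exists a, enabled P u a /\ forall t, 0 < P u a t -> t \in Z.
Proof.
rewrite inE -C_fix !inE negb_or => /andP [_ /forallPn [a]].
rewrite negb_imply => /andP [en /existsPn H]; exists a; split => // t Pt.
by move: (H t); rewrite Pt andbT inE.
Qed.

Definition cc := \sum_u `|rho u|.
Lemma cc_ge0 : 0 <= cc. Proof. by apply: sumr_ge0 => u _. Qed.
Lemma rho_le u : `|rho u| <= cc.
Proof. by rewrite /cc (bigD1 u) //= lerDl; apply: sumr_ge0. Qed.

Definition w0 u : R := if u \in G then rho u else if u \in Z then 0 else - cc.
Definition wk k := iter k B w0.
Definition ws u := supn (fun k => wk k u).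

Lemma w0_ge u : - cc <= w0 u.
Proof.
rewrite /w0; case: ifP => _; first by have := rho_le u; rewrite ler_norml => /andP [] //.
by case: ifP => _ //; rewrite oppr_le0 cc_ge0.
Qed.

Lemma w0_le u : w0 u <= cc.
Proof.
rewrite /w0; case: ifP => _; first by apply: le_trans (rho_le u); apply: ler_norm.
by case: ifP => _; [apply: cc_ge0 | apply: le_trans (_ : 0 <= cc); [rewrite oppr_le0|]; apply: cc_ge0].
Qed.

Lemma w0_B u : w0 u <= B w0 u.
Proof.
case: (boolP (u \in G)) => uG; first by rewrite B_G.
case: (boolP (u \in Z)) => uZ.
  have [a [en Ha]] := Z_stay uZ; apply: le_trans (B_ge _ en).
  rewrite /w0 (negbTE uG) uZ; apply: sumr_ge0 => t _.
  have [Pt|] := boolP (0 < P u a t).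
    by rewrite /w0 (Ha _ Pt) (negbTE (Z_notG (Ha _ Pt))) mulr0.
  rewrite -leNgt => Pt; have -> : P u a t = 0 by apply/eqP; rewrite eq_le Pt (P_ge0 wf).
  by rewrite mul0r.
rewrite {1}/w0 (negbTE uG) (negbTE uZ); apply: le_trans (B_ge _ (a0_en u)).
by rewrite -{1}(sumP_const (- cc) (a0_en u)); apply: sumP_mono w0_ge.
Qed.

Lemma wk_ndecr u : ndecr (fun k => wk k u).
Proof.
move=> k; elim: k u => [|k IH] u; first exact: w0_B.
by rewrite /wk !iterS; apply: B_mono => t; apply: IH.
Qed.

Lemma wk_ub k u : wk k u <= cc.
Proof. by elim: k u => [|k IH] u; [apply: w0_le | rewrite /wk iterS; apply: B_ub]. Qed.

Lemma wk_le_ws k u : wk k u <= ws u.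
Proof. exact: (supn_ub (fun k => wk_ub k u)). Qed.

Lemma ws_F1 u a : enabled P u a -> \sum_t P u a t * ws t <= ws u.
Proof.
move=> en; rewrite /ws -(supn_lin (c := P u a) (F := fun k t => wk k t) (b := cc)) //.
- apply: supn_le => k; apply: le_trans (B_ge _ en) _.
  by have := wk_le_ws k.+1 u; rewrite /wk iterS.
- by move=> t; apply: (P_ge0 wf).
- exact: wk_ub.
- exact: wk_ndecr.
Qed.

Lemma ws_F2 u : ws u <= B ws u.
Proof.
apply: supn_le => k; case: k => [|k].
  by apply: le_trans (w0_B u) _; apply: B_mono => t; apply: (wk_le_ws 0).
by rewrite /wk iterS; apply: B_mono => t; apply: wk_le_ws.
Qed.

Lemma ws_B u : B ws u = ws u.
Proof. by apply/eqP; rewrite eq_le ws_F2 ws_F1 // amax_en. Qed.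

Lemma wk_G k u : u \in G -> wk k u = rho u.
Proof.
move=> uG; elim: k => [|k IH]; first by rewrite /wk /= /w0 uG.
by rewrite /wk iterS B_G.
Qed.

Lemma ws_G u : u \in G -> ws u = rho u.
Proof.
move=> uG; apply/eqP; rewrite eq_le; apply/andP; split.
  by apply: supn_le => k; rewrite wk_G.
by rewrite -(wk_G 0 uG); apply: wk_le_ws.
Qed.

Lemma ws_Z u : u \in Z -> 0 <= ws u.
Proof.
move=> uZ; apply: le_trans (wk_le_ws 0 u).
by rewrite /wk /= /w0 (negbTE (Z_notG uZ)) uZ.
Qed.


Section Bound.
Variable sg : sched.
Hypothesis hsg : is_scheduler P sg.

Lemma Ek_ge0 X (s0 : S) k h : 0 <= Ek P sg (fun h' => ind X (lst s0 h')) s0 k h.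
Proof. by case/andP: (Ek_ind_bnd hsg X s0 k h). Qed.

Lemma Ek_le1 X (s0 : S) k h : Ek P sg (fun h' => ind X (lst s0 h')) s0 k h <= 1.
Proof. by case/andP: (Ek_ind_bnd hsg X s0 k h). Qed.

Lemma Ek_B (phi : S -> R) (s0 : S) k h :
  Ek P sg (fun h' => phi (lst s0 h')) s0 k h <= iter k B phi (lst s0 h).
Proof.
elim: k h => [|k IH] h //=.
apply: le_trans (_ : \sum_a \sum_t sg s0 h a * P (lst s0 h) a t * iter k B phi t <= _).
  apply: ler_sum => a _; apply: ler_sum => t _; apply: ler_wpM2l.
    by apply: mulr_ge0; [apply: (sg_ge0 hsg) | apply: (P_ge0 wf)].
  by apply: le_trans (IH _) _; rewrite last_rcons_st.
by apply: (step_le hsg) => a en; apply: B_ge.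
Qed.

Variable p : R.
Hypotheses (p0 : 0 < p) (p1 : p <= 1) (pP : forall u a t, 0 < P u a t -> p <= P u a t).

Lemma eta_lemma j (s0 : S) h : lst s0 h \in iter j PhiC (@finset.set0 S) ->
  p ^+ j <= Ek P sg (fun h' => ind G (lst s0 h')) s0 j h.
Proof.
elim: j h => [|j IH] h; first by rewrite /= inE.
rewrite iterS /PhiC !inE => /orP [uG|/forallP H].
  rewrite (Ek_absorb wf hsg) /ind ?uG; last by apply: hG.
  by apply: exprn_ile1 => //; apply: ltW.
rewrite /=; apply: (step_ge hsg) => a en.
have /existsP [t /andP [tX Pt]] := implyP (H a) en.
apply: le_trans (_ : P (lst s0 h) a t * Ek P sg (fun h' => ind G (lst s0 h')) s0 j (rcons h (a, t)) <= _).
  rewrite exprS; apply: ler_pM; [exact: ltW | by apply: exprn_ge0; apply: ltW | exact: pP |].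
  by apply: IH; rewrite last_rcons_st.
rewrite (bigD1 t) //= lerDl; apply: sumr_ge0 => t' _; apply: mulr_ge0; first exact: (P_ge0 wf).
exact: Ek_ge0.
Qed.

Lemma C_iter : C = iter #|S| PhiC (@finset.set0 S).
Proof. by []. Qed.

Lemma mass k (s0 : S) h :
  Ek P sg (fun h' => ind G (lst s0 h')) s0 k h + p ^+ #|S| * Ek P sg (fun h' => ind (C :\: G) (lst s0 h')) s0 k h
  <= Ek P sg (fun h' => ind G (lst s0 h')) s0 (k + #|S|) h.
Proof.
rewrite Ek_tower -(Ek_scale _ _ (p ^+ #|S|)) -Ek_add.
apply: (Ek_le wf hsg) => h'.
have [uG|uG] := boolP (lst s0 h' \in G).
  rewrite (Ek_absorb wf hsg) /ind ?uG; last by apply: hG.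
  by rewrite inE uG /= mulr0 addr0.
have [uC|uC] := boolP (lst s0 h' \in C).
  rewrite /ind (negbTE uG) inE uG uC /= mulr1 add0r.
  by apply: eta_lemma; rewrite -C_iter.
by rewrite /ind (negbTE uG) inE (negbTE uC) andbF mulr0 addr0; apply: Ek_ge0.
Qed.

Lemma escape e (s0 : S) K : 0 < e ->
  exists k, (K <= k)%N /\ Ek P sg (fun h' => ind (C :\: G) (lst s0 h')) s0 k [::] <= e.
Proof.
move=> he; set N := #|S|.
have pN : 0 < p ^+ N by apply: exprn_gt0.
have claim : forall j, (exists k, (K <= k)%N /\ Ek P sg (fun h' => ind (C :\: G) (lst s0 h')) s0 k [::] <= e)
   \/ j%:R * (p ^+ N * e) <= Ek P sg (fun h' => ind G (lst s0 h')) s0 (K + j * N) [::].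
  elim=> [|j [IH|IH]]; first by right; rewrite mul0r; apply: Ek_ge0.
    by left.
  have [small|big] := leP (Ek P sg (fun h' => ind (C :\: G) (lst s0 h')) s0 (K + j * N) [::]) e.
    by left; exists (K + j * N)%N; rewrite leq_addr.
  right; rewrite mulSnr addnA -natr1 mulrDl mul1r.
  apply: le_trans (mass _ _ _); apply: lerD => //.
  by apply: ler_wpM2l; [apply: ltW | apply: ltW].
have hx : 0 <= (p ^+ N * e)^-1 by rewrite invr_ge0; apply: ltW; apply: mulr_gt0.
have [//|H] := claim (Num.Def.archi_bound (p ^+ N * e)^-1).
exfalso; move: (le_trans H (Ek_le1 _ _ _ _)); apply/negP; rewrite -ltNge.
rewrite -ltr_pdivrMr; last by apply: mulr_gt0.
by rewrite div1r; apply: archi_boundP.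
Qed.

End Bound.

Lemma rho_le_w0 u : rho u <= w0 u + cc * ind (C :\: G) u.
Proof.
rewrite /w0 /ind finset.in_setD.
case uG: (u \in G) => /=; first by rewrite mulr0 addr0.
rewrite rho_out ?uG //.
case uZ: (u \in Z); move: uZ; rewrite /Z finset.in_setC.
  by move=> /negbTE ->; rewrite mulr0 addr0.
by move=> /negbFE ->; rewrite mulr1 addNr.
Qed.

Lemma Obj_bound sg : is_scheduler P sg -> forall s, Obj sg s <= ws s.
Proof.
move=> hsg s.
have [p [p0 p1 pP']] := pos_min (fun x : S * Act * S => P x.1.1 x.1.2 x.2).
have pP : forall u a t, 0 < P u a t -> p <= P u a t by move=> u a t; apply: (pP' (u, a, t)).
apply: le_eps => e he.
set W := \sum_i `|wt i|.
have W0 : 0 <= W by apply: sumr_ge0.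
have Wc : 0 <= W + cc by apply: addr_ge0 => //; apply: cc_ge0.
set e' := e / (W + cc + 1).
have he' : 0 < e' by apply: divr_gt0 => //; apply: ltr_wpDl.
set F := fun k i => Ek P sg (fun h => ind (Tt i) (lst s h)) s k [::].
have Fb : forall k i, F k i <= 1 by move=> k i; apply: Ek_le1.
have Fn : forall i, ndecr (F^~ i) by move=> i; apply: Ek_ind_ndecr.
have [K HK] := unif_approx Fb Fn he'.
have [k [Kk hk]] := escape hsg p0 p1 pP s K he'.
have step1 : Obj sg s <= \sum_i wt i * F k i + W * e'.
  rewrite /Obj /W mulr_suml -big_split /=; apply: ler_sum => i _.
  rewrite -lerBlDl -mulrBr; apply: le_trans (ler_norm _) _; rewrite normrM; apply: ler_wpM2l => //.
  have h1 := HK k Kk i; have h2 : F k i <= supn (F^~ i) := supn_ub (Fb^~ i) k.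
  rewrite ger0_norm ?subr_ge0 //.
  by rewrite lerBlDr addrC -lerBlDr; apply: ltW.
have step2 : \sum_i wt i * F k i = Ek P sg (fun h => rho (lst s h)) s k [::].
  by rewrite /rho (Ek_lin P sg wt (fun i h => ind (Tt i) (lst s h))).
have step3 : Ek P sg (fun h => rho (lst s h)) s k [::] <= ws s + cc * e'.
  apply: le_trans (_ : Ek P sg (fun h => w0 (lst s h) + cc * ind (C :\: G) (lst s h)) s k [::] <= _).
    by apply: (Ek_le wf hsg) => h; apply: rho_le_w0.
  rewrite Ek_add Ek_scale; apply: lerD; last by apply: ler_wpM2l => //; apply: cc_ge0.
  by apply: le_trans (Ek_B hsg w0 s k [::]) _; apply: wk_le_ws.
apply: le_trans step1 _; rewrite step2.
apply: le_trans (_ : ws s + cc * e' + W * e' <= _); first by rewrite lerD2r.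
rewrite -addrA lerD2l -mulrDl addrC.
rewrite /e' mulrA ler_pdivrMr; last by apply: ltr_wpDl.
by rewrite mulrC ler_wpM2l ?lerDl //; apply: ltW.
Qed.

Lemma P_pos0 u a t : ~~ (0 < P u a t) -> P u a t = 0.
Proof. by rewrite -leNgt => H; apply/eqP; rewrite eq_le H (P_ge0 wf). Qed.

Lemma avg_max u a (x : S -> R) m : enabled P u a ->
  (forall t, 0 < P u a t -> x t <= m) -> \sum_t P u a t * x t = m ->
  forall t, 0 < P u a t -> x t = m.
Proof.
move=> en Hle Hs t Pt.
have H0 : \sum_t P u a t * (m - x t) = 0.
  by under eq_bigr do rewrite mulrBr; rewrite sumrB Hs sumP_const // subrr.
have Hnn : forall t, true -> 0 <= P u a t * (m - x t).
  move=> t' _; have [Pt'|Pt'] := boolP (0 < P u a t').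
    by apply: mulr_ge0; [apply: ltW | rewrite subr_ge0; apply: Hle].
  by rewrite P_pos0 // mul0r.
have := psumr_eq0P Hnn H0 (i := t) erefl => /eqP; rewrite mulf_eq0 (gt_eqF Pt) /= subr_eq0.
by move/eqP.
Qed.

Definition Aopt u a : bool := enabled P u a && (\sum_t P u a t * ws t == ws u).

Lemma amax_opt u : Aopt u (amax ws u).
Proof. by rewrite /Aopt amax_en /=; apply/eqP; apply: ws_B. Qed.

Lemma G_opt u a : u \in G -> enabled P u a -> Aopt u a.
Proof. by move=> uG en; rewrite /Aopt en sumP_absorb // eqxx. Qed.

Definition Y : {set S} := [set u | (u \in Z) && (ws u <= 0)].

Lemma Y_ws u : u \in Y -> ws u = 0.
Proof. by rewrite inE => /andP [uZ le0]; apply/eqP; rewrite eq_le le0 ws_Z. Qed.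

Lemma Y_Z u : u \in Y -> u \in Z.
Proof. by rewrite inE => /andP []. Qed.

Lemma Y_stay u : u \in Y -> exists a, Aopt u a /\ forall t, 0 < P u a t -> t \in Y.
Proof.
move=> uY; have [a [en Ha]] := Z_stay (Y_Z uY).
have nn : forall t, true -> 0 <= P u a t * ws t.
  move=> t _; have [Pt|Pt] := boolP (0 < P u a t).
    by apply: mulr_ge0; [apply: ltW | apply: ws_Z; apply: Ha].
  by rewrite P_pos0 // mul0r.
have S0 : \sum_t P u a t * ws t = 0.
  apply/eqP; rewrite eq_le sumr_ge0 // andbT; apply: le_trans (ws_F1 en) _; by rewrite Y_ws.
exists a; split; first by rewrite /Aopt en S0 (Y_ws uY) eqxx.
move=> t Pt; have := psumr_eq0P nn S0 (i := t) erefl => /eqP.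
rewrite mulf_eq0 (gt_eqF Pt) /= => /eqP wt0.
by rewrite inE (Ha _ Pt) wt0 lexx.
Qed.

Definition PhiL (X : {set S}) : {set S} :=
  G :|: Y :|: [set u | [exists a, Aopt u a && [exists t, (t \in X) && (0 < P u a t)]]].

Lemma PhiL_mono : {homo PhiL : X Y / X \subset Y}.
Proof.
move=> X X' XY; apply/fintype.subsetP => u; rewrite !inE => /orP [->//|/existsP [a /andP [Ha /existsP [t /andP [tX Pt]]]]].
apply/orP; right; apply/existsP; exists a; rewrite Ha /=; apply/existsP; exists t.
by rewrite Pt (fintype.subsetP XY).
Qed.

Definition L := fixset PhiL.
Lemma L_fix : PhiL L = L. Proof. exact: fixsetK PhiL_mono. Qed.

Lemma L_all u : u \in L.
Proof.
apply/negPn/negP => uL0.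
set V := ~: L.
have V_cl : forall v a t, v \in V -> Aopt v a -> 0 < P v a t -> t \in V.
  move=> v a t; rewrite !inE => vL Ha Pt; apply: contra vL => tL.
  rewrite -L_fix !inE; apply/orP; right; apply/existsP; exists a; rewrite Ha /=.
  by apply/existsP; exists t; rewrite tL Pt.
have V_GY : forall v, v \in V -> (v \notin G) && (v \notin Y).
  move=> v; rewrite inE; apply: contraR; rewrite negb_and !negbK => H.
  by rewrite -L_fix /PhiL; case/orP: H => H; rewrite !finset.in_setU H ?orbT.
have V_Z : forall v, v \in V -> v \in Z.
  move=> v vV; rewrite /Z finset.in_setC /C /fixset.
  suff : forall j v, v \in V -> v \notin iter j PhiC (@finset.set0 S) by apply.
  elim=> [|j IH] v' v'V; first by rewrite inE.
  rewrite iterS /PhiC !inE negb_or; case/andP: (V_GY _ v'V) => -> _ /=.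
  apply/forallPn; exists (amax ws v'); rewrite negb_imply amax_en /=.
  apply/existsPn => t; apply/negP => /andP [tj Pt].
  by move: (IH t (V_cl _ _ _ v'V (amax_opt v') Pt)); rewrite tj.
have V_pos : forall v, v \in V -> 0 < ws v.
  move=> v vV; case/andP: (V_GY _ vV) => _; rewrite inE (V_Z _ vV) /= -ltNge; exact.
have uV : u \in V by rewrite inE.
set um := Order.arg_max u (fun v => v \in V) ws.
have [umV umax] : um \in V /\ forall v, v \in V -> ws v <= ws um.
  by rewrite /um; case: (arg_maxP ws uV) => x xV H; split => // v /H.
set m := ws um.
have m0 : 0 < m := V_pos _ umV.
set M : {set S} := [set v | (v \in V) && (ws v == m)].
have M_cl : forall v a t, v \in M -> Aopt v a -> 0 < P v a t -> t \in M.
  move=> v a t; rewrite inE => /andP [vV /eqP vm] Ha Pt.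
  case/andP: (Ha) => en /eqP Hs.
  rewrite inE (V_cl _ _ _ vV Ha Pt) /=; apply/eqP.
  apply: (avg_max en _ _ Pt); last by rewrite Hs.
  by move=> t' Pt'; apply: umax; apply: (V_cl _ _ _ vV Ha Pt').
have [g [g0 _ gP']] := pos_min (fun x : S * Act => ws x.1 - \sum_t P x.1 x.2 t * ws t).
have gP : forall v a, enabled P v a -> ~~ Aopt v a -> g <= ws v - \sum_t P v a t * ws t.
  move=> v a en nA; apply: (gP' (v, a)); rewrite subr_gt0 lt_neqAle ws_F1 // andbT.
  by move: nA; rewrite /Aopt en /=.
set eps := Num.min g m.
have eps0 : 0 < eps by rewrite lt_min g0 m0.
set wt' := fun v => ws v - eps * ind M v.
have Bwt : forall v, B wt' v <= wt' v.
  move=> v; rewrite /B; move: (amax wt' v) (amax_en wt' v) => a en.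
  have E : \sum_t P v a t * wt' t = \sum_t P v a t * ws t - eps * \sum_t P v a t * ind M t.
    rewrite mulr_sumr -sumrB; apply: eq_bigr => t _; rewrite /wt' mulrBr.
    by rewrite mulrCA.
  rewrite E; have [vM|vM] := boolP (v \in M); last first.
    rewrite /wt' /ind (negbTE vM) mulr0 subr0; apply: le_trans (ws_F1 en).
    rewrite lerBlDr lerDl; apply: mulr_ge0; first exact: ltW.
    by apply: sumr_ge0 => t _; apply: mulr_ge0; [apply: (P_ge0 wf) | apply: ind_ge0].
  have vm : ws v = m by move: vM; rewrite inE => /andP [_ /eqP].
  rewrite /wt' /ind vM mulr1 vm.
  have [Ha|nA] := boolP (Aopt v a).
    have -> : \sum_t P v a t * (t \in M)%:R = 1.
      rewrite -[RHS](en_sum en); apply: eq_bigr => t _.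
      have [Pt|Pt] := boolP (0 < P v a t); first by rewrite (M_cl _ _ _ vM Ha Pt) mulr1.
      by rewrite P_pos0 // mul0r.
    by case/andP: Ha => _ /eqP ->; rewrite vm mulr1.
  have := gP _ _ en nA; rewrite vm => H.
  apply: le_trans (_ : \sum_t P v a t * ws t <= _).
    rewrite lerBlDr lerDl; apply: mulr_ge0; first exact: ltW.
    by apply: sumr_ge0 => t _; apply: mulr_ge0; [apply: (P_ge0 wf) | apply: ind_ge0].
  have eg : eps <= g by rewrite ge_min lexx.
  move: H eg; set x := \sum_t P v a t * ws t; move=> H eg; lra.
have wk_le : forall k v, wk k v <= wt' v.
  elim=> [|k IH] v.
    rewrite /wt' /ind; have [vM|vM] := boolP (v \in M); last by rewrite mulr0 subr0; apply: (wk_le_ws 0).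
    have vV : v \in V by move: vM; rewrite inE => /andP [].
    rewrite /wk /= /w0 (negbTE (Z_notG (V_Z _ vV))) (V_Z _ vV) mulr1 subr_ge0.
    have -> : ws v = m by move: vM; rewrite inE => /andP [_ /eqP].
    by rewrite ge_min lexx orbT.
  by rewrite /wk iterS; apply: le_trans (Bwt v); apply: B_mono.
have : ws um <= wt' um by apply: supn_le => k; apply: wk_le.
rewrite /wt' /ind.
have -> : um \in M by rewrite inE umV /= eqxx.
by rewrite mulr1 -/m => H; move: H eps0; lra.
Qed.

Definition rk u := fix_order PhiL u.

Lemma rank_step u : u \notin G -> u \notin Y ->
  exists a, Aopt u a /\ exists t, 0 < P u a t /\ (rk t < rk u)%N.
Proof.
move=> uG uY.
have := in_iter_fix_orderE PhiL u; rewrite -/L L_all.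
have := fix_order_gt0 PhiL u; rewrite -/L L_all -/(rk u).
case: (rk u) => [//|r] _; rewrite iterS /PhiL !finset.in_setU (negbTE uG) (negbTE uY) /= inE.
move=> /existsP [a /andP [Ha /existsP [t /andP [tr Pt]]]].
exists a; split => //; exists t; split => //.
by rewrite ltnS; apply: (fix_order_small PhiL_mono).
Qed.

Definition dgood u a : bool :=
  [&& Aopt u a, (u \in Y) ==> [forall t, (0 < P u a t) ==> (t \in Y)]
    & (u \notin G) ==> (u \notin Y) ==> [exists t, (0 < P u a t) && (rk t < rk u)%N]].

Lemma ex_dgood u : exists a, dgood u a.
Proof.
have [uG|uG] := boolP (u \in G).
  have uY : (u \in Y) = false.
    by apply/negbTE; apply: contraL uG => /Y_Z; apply: Z_notG.
  exists (a0 u); apply/and3P; split; first by apply: G_opt => //; apply: a0_en.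
    by rewrite uY.
  by rewrite uG.
have [uY|uY] := boolP (u \in Y).
  have [a [Ha Hs]] := Y_stay uY; exists a; apply/and3P; split => //.
    by apply/implyP => _; apply/forallP => t; apply/implyP; apply: Hs.
  by rewrite uY implybT.
have [a [Ha [t [Pt rt]]]] := rank_step uG uY.
exists a; apply/and3P; split => //; first by rewrite (negbTE uY).
by rewrite uG uY /=; apply/existsP; exists t; rewrite Pt rt.
Qed.

Definition dopt u : Act := xchoose (ex_dgood u).

Lemma dopt_good u : dgood u (dopt u).
Proof. exact: xchooseP. Qed.

Lemma dopt_opt u : Aopt u (dopt u).
Proof. by case/and3P: (dopt_good u). Qed.

Lemma dopt_md : is_md P dopt.
Proof. by move=> u; case/andP: (dopt_opt u). Qed.

Lemma supn_eq (f g : nat -> R) b : (forall k, f k = g k) -> (forall k, f k <= b) -> supn f = supn g.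
Proof.
move=> E hb; have hb' : forall k, g k <= b by move=> k; rewrite -E.
apply/eqP; rewrite eq_le; apply/andP; split.
  by apply: supn_le => k; rewrite E; apply: (supn_ub hb').
by apply: supn_le => k; rewrite -E; apply: (supn_ub hb).
Qed.

Lemma supn_cst (f : nat -> R) x : (forall k, f k = x) -> supn f = x.
Proof.
move=> E; apply/eqP; rewrite eq_le; apply/andP; split.
  by apply: supn_le => k; rewrite E.
by rewrite -(E 0%N); apply: (supn_ub (b := x)) => k; rewrite E.
Qed.

Notation md := (@md_sched R S Act dopt).
Lemma md_ok : is_scheduler P md. Proof. exact: md_valid dopt_md. Qed.

Definition xk i k u := iter k (Bd P dopt) (ind (Tt i)) u.

Lemma xk_Ek i k u : xk i k u = Ek P md (fun h => ind (Tt i) (lst u h)) u k [::].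
Proof. by rewrite Ek_md. Qed.

Lemma xk_le1 i k u : xk i k u <= 1.
Proof. by rewrite xk_Ek; apply: (Ek_le1 md_ok). Qed.

Lemma xk_ndecr i u : ndecr (fun k => xk i k u).
Proof. by move=> k; rewrite !xk_Ek; apply: (Ek_ind_ndecr md_ok). Qed.

Definition Xd i u := supn (fun k => xk i k u).

Lemma Xd_fix i u : Xd i u = \sum_t P u (dopt u) t * Xd i t.
Proof.
rewrite /Xd -(supn_shift (fun k => xk_le1 i k u) (xk_ndecr i u)).
have -> : (fun k => xk i k.+1 u) = (fun k => \sum_t P u (dopt u) t * xk i k t) by [].
apply: supn_lin => //; [by move=> t; apply: (P_ge0 wf) | exact: xk_le1 | move=> t; exact: xk_ndecr].
Qed.

Definition Wd u := \sum_i wt i * Xd i u.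

Lemma Obj_md s : Obj md s = Wd s.
Proof.
rewrite /Obj /Wd; apply: eq_bigr => i _; congr (_ * _).
apply: (supn_eq (b := 1)) => k; first by rewrite xk_Ek.
exact: (Ek_le1 md_ok).
Qed.

Lemma Wd_fix u : Wd u = \sum_t P u (dopt u) t * Wd t.
Proof.
rewrite /Wd; under eq_bigr do rewrite Xd_fix mulr_sumr.
rewrite exchange_big /=; apply: eq_bigr => t _; rewrite mulr_sumr; apply: eq_bigr => i _.
by rewrite mulrCA.
Qed.

Lemma Wd_G u : u \in G -> Wd u = rho u.
Proof.
move=> uG; apply: eq_bigr => i _; congr (_ * _); apply: supn_cst => k.
elim: k => [//|k IH]; rewrite /xk iterS /Bd sumP_absorb //.
exact: dopt_md.
Qed.

Lemma Wd_Y u : u \in Y -> Wd u = 0.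
Proof.
move=> uY; apply: big1 => i _; rewrite /Xd (supn_cst (x := 0)) ?mulr0 // => k.
elim: k u uY => [|k IH] u uY.
  rewrite /xk /= /ind; have -> : (u \in Tt i) = false; last by [].
  apply/negbTE; apply: contraL (Z_notG (Y_Z uY)) => H; rewrite negbK.
  exact: (fintype.subsetP (hT i)).
rewrite /xk iterS /Bd; apply: big1 => t _.
have [Pt|Pt] := boolP (0 < P u (dopt u) t); last by rewrite P_pos0 // mul0r.
case/and3P: (dopt_good u) => _ /implyP /(_ uY) /forallP /(_ t) /implyP /(_ Pt) tY _.
by rewrite -/(xk i k t) IH // mulr0.
Qed.

Lemma ws_le_Wd u : ws u <= Wd u.
Proof.
set del := fun v => ws v - Wd v.
have del_fix : forall v, del v = \sum_t P v (dopt v) t * del t.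
  move=> v; rewrite /del; under eq_bigr do rewrite mulrBr; rewrite sumrB -Wd_fix.
  by case/andP: (dopt_opt v) => _ /eqP ->.
have del_GY : forall v, (v \in G) || (v \in Y) -> del v = 0.
  move=> v /orP [vG|vY]; rewrite /del; first by rewrite Wd_G // ws_G // subrr.
  by rewrite Wd_Y // Y_ws // subrr.
set um := Order.arg_max u predT del.
have umax : forall v, del v <= del um.
  by rewrite /um; case: (arg_maxP del (erefl : predT u)) => x _ H v; apply: H.
set m := del um.
have claim : forall n v, (rk v <= n)%N -> del v = m -> m <= 0.
  elim=> [|n IH] v hv hdel.
    have [GY|nGY] := boolP ((v \in G) || (v \in Y)); first by rewrite -hdel del_GY.
    move: nGY; rewrite negb_or => /andP [vG vY].
    case/and3P: (dopt_good v) => _ _ /implyP /(_ vG) /implyP /(_ vY) /existsP [t /andP [_ rt]].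
    by move: rt; rewrite ltnNge (leq_trans hv (leq0n _)).
  have [GY|nGY] := boolP ((v \in G) || (v \in Y)); first by rewrite -hdel del_GY.
  move: nGY; rewrite negb_or => /andP [vG vY].
  case/and3P: (dopt_good v) => _ _ /implyP /(_ vG) /implyP /(_ vY) /existsP [t /andP [Pt rt]].
  apply: (IH t); first by rewrite -ltnS; apply: leq_trans rt hv.
  apply: (avg_max _ _ _ Pt); first exact: dopt_md.
    by move=> t' _; apply: umax.
  by rewrite -del_fix.
have : del u <= 0 by apply: le_trans (umax u) _; apply: (claim (rk um) um).
by rewrite /del subr_le0.
Qed.

Theorem core_max : exists d, is_md P d /\
  forall sg, is_scheduler P sg -> forall s, Obj sg s <= Obj (@md_sched R S Act d) s.
Proof.
exists dopt; split; first exact: dopt_md.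
by move=> sg hsg s; rewrite Obj_md; apply: le_trans (Obj_bound hsg s) (ws_le_Wd s).
Qed.

End Core.

Section Assembly.
Variables (R : realType) (S Act : finType) (P : S -> Act -> S -> R).
Hypothesis wf : mdp_wf P.

Notation lst := (@last_state S Act).
Notation sched := (scheduler R S Act).

Lemma rw_Ek (T : {set S}) (sg : sched) s0 k h : absorbing P T -> is_scheduler P sg ->
  reach_within P sg T s0 k h = Ek P sg (fun h' => ind R T (lst s0 h')) s0 k h.
Proof.
move=> hT hsg; elim: k h => [|k IH] h; rewrite [LHS]/=.
  by rewrite /ind /=; case: (lst s0 h \in T).
case: ifP => uT.
  by rewrite (Ek_absorb wf hsg) /ind ?uT //; apply: hT.
by rewrite /=; apply: eq_bigr => a _; apply: eq_bigr => t _; rewrite IH.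
Qed.

Lemma Pr_Ek (T : {set S}) (sg : sched) s : absorbing P T -> is_scheduler P sg ->
  Pr_reach P sg s T = supn (fun k => Ek P sg (fun h => ind R T (lst s h)) s k [::]).
Proof.
move=> hT hsg; rewrite /Pr_reach /supn.
by have -> : (fun k => reach_within P sg T s k [::]) = (fun k => Ek P sg (fun h => ind R T (lst s h)) s k [::])
  by apply: boolp.funext => k; apply: rw_Ek.
Qed.

End Assembly.

Section Absorbify.
Variables (R : realType) (S Act : finType) (P : S -> Act -> S -> R).
Hypothesis wf : mdp_wf P.
Variable T0 : {set S}.

Notation lst := (@last_state S Act).
Notation sched := (scheduler R S Act).

Definition P' : S -> Act -> S -> R := fun u a t => if u \in T0 then (t == u)%:R else P u a t.

Lemma sum_ind1 (u : S) : \sum_t (t == u)%:R = 1 :> R.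
Proof. by rewrite (bigD1 u) //= eqxx big1 ?addr0 // => t /negbTE ->. Qed.

Lemma en_P' u a : enabled P u a -> enabled P' u a.
Proof. by rewrite /enabled /P'; case uT: (u \in T0) => // _; rewrite sum_ind1. Qed.

Lemma wf' : mdp_wf P'.
Proof.
case: wf => H1 H2 H3; split.
- move=> u a t; rewrite /P'; case: ifP => _; last exact: H1.
  by case: (t == u); rewrite ?lexx ?ler01.
- move=> u a; rewrite /P'; case uT: (u \in T0); last exact: H2.
  by rewrite sum_ind1 eqxx.
- move=> u; have [a en] := H3 u; exists a; exact: en_P'.
Qed.

Lemma valid_P' (sg : sched) : is_scheduler P sg -> is_scheduler P' sg.
Proof.
move=> hsg s0 h; case: (hsg s0 h) => H1 H2 H3; split => // a hn; apply: H2.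
by apply: contra hn; apply: en_P'.
Qed.

Lemma absorb_P' : absorbing P' T0.
Proof. by move=> u uT a _; rewrite /P' uT eqxx. Qed.

Lemma rw_P' (sg : sched) s0 k h : reach_within P' sg T0 s0 k h = reach_within P sg T0 s0 k h.
Proof.
elim: k h => [|k IH] h //=; case: ifP => // uT.
by apply: eq_bigr => a _; apply: eq_bigr => t _; rewrite IH /P' uT.
Qed.

Lemma rw_ext (Q : S -> Act -> S -> R) (sg1 sg2 : sched) s0 k h :
  (forall h a, lst s0 h \notin T0 -> sg1 s0 h a = sg2 s0 h a) ->
  reach_within Q sg1 T0 s0 k h = reach_within Q sg2 T0 s0 k h.
Proof.
move=> E; elim: k h => [|k IH] h //=; case: ifP => // uT.
by apply: eq_bigr => a _; apply: eq_bigr => t _; rewrite IH E // uT.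
Qed.

Lemma ex_en' u : exists a, enabled P u a.
Proof. by case: wf => _ _ H; apply: H. Qed.

Definition dfix (d' : S -> Act) u : Act := if u \in T0 then xchoose (ex_en' u) else d' u.

Lemma dfix_md d' : is_md P' d' -> is_md P (dfix d').
Proof.
move=> hd u; rewrite /dfix; case: ifP => uT; first exact: (xchooseP (ex_en' u)).
by move: (hd u); rewrite /enabled /P' uT.
Qed.

Lemma Pr_P' (sg : sched) s : Pr_reach P' sg s T0 = Pr_reach P sg s T0.
Proof.
rewrite /Pr_reach; have -> // : (fun k => reach_within P' sg T0 s k [::]) = (fun k => reach_within P sg T0 s k [::]).
by apply: boolp.funext => k; apply: rw_P'.
Qed.

Lemma Pr_dfix d' s : Pr_reach P' (@md_sched R S Act d') s T0 = Pr_reach P (@md_sched R S Act (dfix d')) s T0.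
Proof.
rewrite -Pr_P' /Pr_reach.
have -> // : (fun k => reach_within P' (@md_sched R S Act d') T0 s k [::]) =
   (fun k => reach_within P' (@md_sched R S Act (dfix d')) T0 s k [::]).
apply: boolp.funext => k; apply: rw_ext => h a uT.
by rewrite /md_sched /dfix (negbTE uT).
Qed.

End Absorbify.

Section Groups.
Variables (R : realType) (S Act : finType) (P : S -> Act -> S -> R).
Hypothesis wf : mdp_wf P.
Variables (n m : nat) (q : 'I_m -> rat) (s : 'I_m -> S) (k : 'I_m -> 'I_n) (T : 'I_m -> {set S}).
Hypothesis surj : forall j, exists i, k i = j.

Notation sched := (scheduler R S Act).
Notation md d := (@md_sched R S Act d).

Definition fgrp j (tau : sched) : R := \sum_(i | k i == j) ratr (q i) * Pr_reach P tau (s i) (T i).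

Lemma relsum_grp sig : relsum P q s k T sig = \sum_j fgrp j (sig j).
Proof.
rewrite /relsum (partition_big k predT) //=; apply: eq_bigr => j _.
by apply: eq_big => [i //|i /= /eqP ->].
Qed.

Lemma grp_b : (forall i i', k i = k i' -> s i = s i') -> (forall i, absorbing P (T i)) ->
  forall j x, exists d, is_md P d /\ forall sg, is_scheduler P sg -> x * fgrp j sg <= x * fgrp j (md d).
Proof.
move=> hs ha j x; have [i0 hi0] := surj j.
set G := \bigcup_i T i.
have hG : absorbing P G by move=> u /finset.bigcupP [i _ uT]; apply: (ha i).
set wt := fun i => if k i == j then x * ratr (q i) else 0.
have hT : forall i, T i \subset G by move=> i; apply: (finset.bigcup_sup i).
have [d [hd H]] := core_max wf hG wt hT.
have key : forall tau, is_scheduler P tau -> x * fgrp j tau = Obj P wt T tau (s i0).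
  move=> tau htau; rewrite /fgrp /Obj mulr_sumr big_mkcond /=; apply: eq_bigr => i _.
  rewrite /wt; case: eqP => [ki|_]; last by rewrite mul0r.
  by rewrite (hs i i0) ?ki // (Pr_Ek wf) // mulrA.
exists d; split => // sg hsg; rewrite !key //; [exact: H | exact: md_valid].
Qed.

Lemma grp_c : (forall i i', k i = k i' -> ((0 <= q i) <-> (0 <= q i')) /\ T i = T i') ->
  forall j x, exists d, is_md P d /\ forall sg, is_scheduler P sg -> x * fgrp j sg <= x * fgrp j (md d).
Proof.
move=> hc j x; have [i0 hi0] := surj j.
set T0 := T i0.
set y := x * (if (0 <= q i0) then 1 else -1).
have wf1 := wf' wf T0.
have [d' [hd' H]] := core_max wf1 (@absorb_P' R S Act P T0) (fun _ : 'I_1 => y) (fun _ => subxx T0).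
have ObjE : forall tau u, is_scheduler (P' P T0) tau ->
    Obj (P' P T0) (fun _ : 'I_1 => y) (fun _ => T0) tau u = y * Pr_reach (P' P T0) tau u T0.
  by move=> tau u htau; rewrite /Obj big_ord1 (Pr_Ek wf1) //; exact: (@absorb_P' R S Act P T0).
have Hy : forall sg u, is_scheduler P sg ->
    y * Pr_reach P sg u T0 <= y * Pr_reach P (md (dfix wf T0 d')) u T0.
  move=> sg u hsg; rewrite -Pr_dfix -(Pr_P' P T0 sg u) -!ObjE; first exact: H _ (valid_P' T0 hsg) u.
    exact: md_valid.
  exact: valid_P'.
exists (dfix wf T0 d'); split; first exact: dfix_md.
move=> sg hsg; rewrite /fgrp !mulr_sumr; apply: ler_sum => i /eqP ki.
have [hq hTi] := hc i i0 (etrans ki (esym hi0)).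
have E : x * ratr (q i) = `|ratr (q i) : R| * y.
  rewrite /y; case: ifP => q0.
    by rewrite ger0_norm ?ler0q ?(proj2 hq) // mulr1 mulrC.
  have qn : ratr (q i) < 0 :> R.
    by rewrite ltNge ler0q; apply/negP => /(proj1 hq); rewrite q0.
  by rewrite ltr0_norm // mulrN1 mulrNN mulrC.
have e1 : forall Z, x * (ratr (q i) * Z) = `|ratr (q i) : R| * (y * Z).
  by move=> Z; rewrite mulrA E; exact: (esym (mulrA _ _ _)).
rewrite !e1 hTi; apply: ler_wpM2l => //; exact: Hy.
Qed.

End Groups.

Lemma surj_inj (m : nat) (k : 'I_m -> 'I_m) : (forall j, exists i, k i = j) -> injective k.
Proof.
move=> surj.
have ex : forall j, exists i, k i == j by move=> j; have [i hi] := surj j; exists i; apply/eqP.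
pose g j := xchoose (ex j).
have gK : cancel g k by move=> j; apply/eqP; apply: (xchooseP (ex j)).
have ginj : injective g := can_inj gK.
move=> i i'.
have /codomP [j ->] := injF_onto ginj i.
have /codomP [j' ->] := injF_onto ginj i'.
by rewrite !gK => ->.
Qed.

Unset Implicit Arguments.
Set Strict Implicit.

Theorem corollary1 (R : realType) (S Act : finType) (P : S -> Act -> S -> R)
  (n m : nat) (q : 'I_m -> rat) (s : 'I_m -> S) (k : 'I_m -> 'I_n)
  (T : 'I_m -> {set S}) (c : rcomp) (qc : rat) :
  (0 < #|S|)%N ->
  mdp_wf P ->
  (n <= m)%N ->
  (forall j : 'I_n, exists i : 'I_m, k i = j) ->
  comp_ok c ->
  ( n = m
    \/ ((forall i i', k i = k i' -> s i = s i') /\ (forall i, absorbing P (T i)))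
    \/ (forall i i', k i = k i' -> ((0 <= q i) <-> (0 <= q i')) /\ T i = T i') ) ->
  (RelReach_gen P q s k T c qc <-> RelReach_md P q s k T c qc).
Proof.
move=> _ wf _ surj _ hcond.
have grp : forall j x, exists d, is_md P d /\ forall sg, is_scheduler P sg ->
    x * fgrp P q s k T j sg <= x * fgrp P q s k T j (@md_sched R S Act d).
  case: hcond => [Enm|[[hs ha]|hc]].
  - subst n; apply: grp_c => // i i' E.
    by rewrite (surj_inj surj E); split.
  - exact: grp_b.
  - exact: grp_c.
have [dmax Hmax] := boolp.choice (fun j => grp j 1).
have [dmin Hmin] := boolp.choice (fun j => grp j (-1)).
have relmax : forall sig, (forall j, is_scheduler P (sig j)) ->
    relsum P q s k T sig <= relsum P q s k T (fun j => @md_sched R S Act (dmax j)).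
  move=> sig hsig; rewrite !relsum_grp; apply: ler_sum => j _.
  by have := (Hmax j).2 _ (hsig j); rewrite !mul1r.
have relmin : forall sig, (forall j, is_scheduler P (sig j)) ->
    relsum P q s k T (fun j => @md_sched R S Act (dmin j)) <= relsum P q s k T sig.
  move=> sig hsig; rewrite !relsum_grp; apply: ler_sum => j _.
  by have := (Hmin j).2 _ (hsig j); rewrite !mulN1r lerN2.
have mdmax : forall j, is_md P (dmax j) by move=> j; case: (Hmax j).
have mdmin : forall j, is_md P (dmin j) by move=> j; case: (Hmin j).
split.
- move=> [sig [hsig hc]].
  have hM := relmax _ hsig; have hm := relmin _ hsig.
  move: hc hM hm.
  set r := relsum P q s k T sig.
  set rM := relsum P q s k T (fun j => @md_sched R S Act (dmax j)).
  set rm := relsum P q s k T (fun j => @md_sched R S Act (dmin j)).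
  move=> hc hM hm.
  case: c hc => [|| eps] /= hc.
  + by exists dmax; split => //=; apply: le_trans hc hM.
  + by exists dmax; split => //=; apply: lt_le_trans hc hM.
  + have [hq|hq] := leP (ratr qc) r.
    * exists dmax; split => //=; rewrite -/rM.
      move: hc; rewrite ger0_norm ?subr_ge0 // => hc.
      apply: lt_le_trans (ler_norm _); lra.
    * exists dmin; split => //=; rewrite -/rm.
      move: hc; rewrite ltr0_norm ?subr_lt0 // => hc.
      rewrite distrC; apply: lt_le_trans (ler_norm _); lra.
- move=> [d [hd hc]]; exists (fun j => @md_sched R S Act (d j)); split => // j.
  exact: md_valid.
Qed.
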